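(* Consider the closed-loop system described in the context, with the gain-scheduling controller $u[k]=K[k]\tilde y[k]$, $K[k]=\alpha_1[k]K_1+\alpha_2[k]K_2$, where $K_1,K_2\in\mathbb{R}^{n_u\times n_y}$ are given, $\Delta_1:=\Delta_{\min}$, $\Delta_2:=\Delta_{\max}$, and $$\alpha_1[k]:=\frac{\Delta_2-E[k]}{\Delta_2-\Delta_1},\qquad \alpha_2[k]:=\frac{E[k]-\Delta_1}{\Delta_2-\Delta_1}.$$ Let $\sigma\in(0,1]$ and $\gamma>0$. For $\bm j=(j_1,\dots,j_{n_y})\in\mathcal{J}_{n_y}$ let $\Lambda_{\bm j}:=\mathrm{diag}(\lambda_1 j_1,\dots,\lambda_{n_y}j_{n_y})$. Suppose there exist, for $p=1,2$ and $\bm j\in\mathcal{J}_{n_y}$, positive definite matrices $P_p\in\mathbb{R}^{n_x\times n_x}$, symmetric matrices with nonnegative entries $$\begin{bmatrix} L_{p,\bm j} & N_{p,\bm j}\\ N_{p,\bm j}^{\top} & M_{p,\bm j}\end{bmatrix}\in\mathbb{R}^{2n_y\times 2n_y}\quad(L_{p,\bm j},M_{p,\bm j},N_{p,\bm j}\in\mathbb{R}^{n_y\times n_y}),$$ and symmetric matrices $Z_{p,\bm j}\in\mathbb{R}^{n_y\times n_y}$, such that for every $p,q\in\{1,2\}$ and every $\bm j\in\mathcal{J}_{n_y}$, $$\begin{bmatrix}\Gamma_{p,q,\bm j} & \Phi_{p,q,\bm j}\\ \Phi_{p,q,\bm j}^{\top} & \Xi_{q,\bm j}\end{bmatrix}\succ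 0,$$ where $N^+_{q,\bm j}:=N_{q,\bm j}+N_{q,\bm j}^{\top}$, $N^-_{q,\bm j}:=N_{q,\bm j}-N_{q,\bm j}^{\top}$, $$R_{q,\bm j}:=\begin{bmatrix} L_{q,\bm j}+M_{q,\bm j}+N^+_{q,\bm j} & L_{q,\bm j}-M_{q,\bm j}-N^-_{q,\bm j}\\ (L_{q,\bm j}-M_{q,\bm j}-N^-_{q,\bm j})^{\top} & L_{q,\bm j}+M_{q,\bm j}+Z_{q,\bm j}\end{bmatrix},$$ $\Gamma_{p,q,\bm j}:=\mathrm{diag}(\sigma^2P_p,\ \gamma^2 I_{n_w},\ N^+_{q,\bm j}+Z_{q,\bm j})$, $\Xi_{q,\bm j}:=\mathrm{diag}(P_q,\ I_{n_z},\ R_{q,\bm j})$, and $$\Phi_{p,q,\bm j}:=\begin{bmatrix} A+BK_pC & BK_pD & BK_p\\ F&0&0\\ \Delta_p\Lambda_{\bm j}C & \Delta_p\Lambda_{\bm j}D & 0\\ 0&0&I_{n_y}\end{bmatrix}^{\top}\Xi_{q,\bm j}.$$ Then: (i) the closed-loop system is practically stable with an ultimate bound of the form $\eta=\rho\cdot\max_{i=1,\dots,n_y}\big((\Delta_{\max}\lambda_i+1)\bar w\|D\|_\infty+\delta_i\big)$ for some $\rho\ge 0$, i.e., for every $\bar w\ge0$, $\|w[k]\|_\infty\le\bar w$ for all $k\in\mathbb{Z}_+$ implies $\limsup_{k\to\infty}\|x[k]\|\le\eta$; (ii) the closed-loop system has decay rate $\sigma$; and (iii) its $\ell^2$-gain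 from $w$ to $z$ is less than or equal to $\gamma$.
   Context: Plant (discrete time, $k\in\mathbb{Z}_+$): $x[k+1]=Ax[k]+Bu[k]$, $y[k]=Cx[k]+Dw[k]$, $z[k]=Fx[k]$, with $x[k]\in\mathbb{R}^{n_x}$, $u[k]\in\mathbb{R}^{n_u}$, $y[k]=[y_1[k],\dots,y_{n_y}[k]]^\top\in\mathbb{R}^{n_y}$, noise $w[k]\in\mathbb{R}^{n_w}$, performance output $z[k]\in\mathbb{R}^{n_z}$. Event-triggered try-once-discard protocol: fix $\Delta_{\max}>\Delta_{\min}\ge0$, $\lambda_i>0$, $\delta_i\ge0$ ($i=1,\dots,n_y$). Let $l^i_k$ be the latest time $\le k$ at which $y_i$ was transmitted (with some stored initial released value). At each $k$, compute $e_i'[k]:=y_i[l^i_{k-1}]-y_i[k]$ and $E_i':=\frac{|e_i'[k]|-\delta_i}{\lambda_i|y_i[k]|}$ (convention: $\alpha/0=+\infty$ for $\alpha>0$, $\beta/0=-\infty$ for $\beta\le0$). Rule: if $\max_iE_i'<\Delta_{\min}$, nothing is transmitted; if $\max_iE_i'\ge\Delta_{\max}$, all $y_i[k]$ with $E_i'\ge\Delta_{\max}$ are transmitted; otherwise a single $y_i[k]$ achieving $E_i'=\max_iE_i'$ is transmitted (any one if ties). If $y_i[k]$ is transmitted then $l^i_k=k$, otherwise $l^i_k=l^i_{k-1}$. Define $E[k]:=\Delta_{\min}$ if $\max_iE_i'<\Delta_{\min}$, $E[k]:=\Delta_{\max}$ if $\max_iE_i'\ge\Delta_{\max}$, and $E[k]:=\max_iE_i'$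 otherwise. Let $\tilde y[k]:=[y_1[l^1_k],\dots,y_{n_y}[l^{n_y}_k]]^\top$; the controller is $u[k]=K(E[k])\tilde y[k]$. Notation: $\|\cdot\|$ Euclidean norm; $\|v\|_\infty=\max_i|v_i|$ and $\|D\|_\infty$ is the induced matrix norm; $\mathcal{J}_n:=\{(j_1,\dots,j_n): j_p\in\{1,-1\}\}$; $\succ0$ means symmetric positive definite; $\ell^2$ is the space of square-summable sequences on $\mathbb{Z}_+$ with $\|v\|_{\ell^2}=(\sum_k v[k]^\top v[k])^{1/2}$. Definitions: the closed-loop system is practically stable if for every $\bar w\ge0$ there is $\eta\ge0$ with $\|w[k]\|_\infty\le\bar w\ \forall k\Rightarrow\limsup_{k\to\infty}\|x[k]\|\le\eta$. It has decay rate $\sigma$ if there is $M\ge1$ such that whenever $w[k]=0$ for all $k$ and $\delta_i=0$ for all $i$, $\|x[k]\|\le M\sigma^k\|x[0]\|$ for all $k\in\mathbb{Z}_+$. Its $\ell^2$-gain (for $w\in\ell^2$) is at most $\gamma$ if, whenever $x[0]=0$ and $\delta_i=0$ for all $i$, $z\in\ell^2$ and $\|z\|_{\ell^2}\le\gamma\|w\|_{\ell^2}$. *)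

(* Defs.v *)
From HB Require Import structures.
From mathcomp Require Import all_boot all_order all_algebra.
From mathcomp Require Import all_classical all_reals.
From mathcomp Require Import topology normedtype sequences.
Set Implicit Arguments. Unset Strict Implicit. Unset Printing Implicit Defensive.
Import Order.TTheory GRing.Theory Num.Theory.
Import numFieldNormedType.Exports.
Local Open Scope ring_scope.

Section Defs.
Variable R : realType.

Definition vnorm n (v : 'cV[R]_n) : R := Num.sqrt (\sum_i v i 0 ^+ 2).
Definition vnorm_inf n (v : 'cV[R]_n) : R := \big[Num.max/0]_i `|v i 0|.
Definition mnorm_inf m n (M : 'M[R]_(m, n)) : R :=
  \big[Num.max/0]_i \sum_j `|M i j|.

Definition posdef n (P : 'M[R]_n) : Prop :=
  P^T = P /\ forall v : 'cV[R]_n, v != 0 -> 0 < (v^T *m P *m v) 0 0.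

(* E'_i = (|e'_i| - delta_i) / (lambda_i |y_i|), with alpha/0 = +oo (alpha > 0),
   beta/0 = -oo (beta <= 0). *)
Definition Eprime (lam del e y : R) : \bar R :=
  if lam * `|y| != 0 then ((`|e| - del) / (lam * `|y|))%:E
  else if 0 < `|e| - del then +oo%E else -oo%E.

Definition Emax ny (Ep : 'I_ny -> \bar R) : \bar R := \big[maxe/-oo%E]_i Ep i.

Definition protocol_ok (Dmin Dmax : R) ny (Ep : 'I_ny -> \bar R)
    (S : {set 'I_ny}) : Prop :=
  [/\ (Emax Ep < Dmin%:E)%E -> S = finset.set0,
      (Dmax%:E <= Emax Ep)%E -> S = finset.finset (fun i => (Dmax%:E <= Ep i)%E) &
      (Dmin%:E <= Emax Ep)%E -> (Emax Ep < Dmax%:E)%E ->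
        exists i0, Ep i0 = Emax Ep /\ S = finset.set1 i0].

Definition Eval (Dmin Dmax : R) (m : \bar R) : R :=
  if (m < Dmin%:E)%E then Dmin else if (Dmax%:E <= m)%E then Dmax else fine m.

Definition gsK nu ny (Dmin Dmax : R) (K1 K2 : 'M[R]_(nu, ny)) (E : R) :=
  ((Dmax - E) / (Dmax - Dmin)) *: K1 + ((E - Dmin) / (Dmax - Dmin)) *: K2.

(* (x, w, yt) is a trajectory of the closed loop; yt k = tilde y[k] and
   yt0 is the stored initial released value (tilde y[-1]). *)
Definition closed_loop nx nu ny nw
    (A : 'M[R]_nx) (B : 'M[R]_(nx, nu)) (C : 'M[R]_(ny, nx)) (D : 'M[R]_(ny, nw))
    (K1 K2 : 'M[R]_(nu, ny)) (Dmin Dmax : R) (lam delta : 'I_ny -> R)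
    (x : nat -> 'cV[R]_nx) (w : nat -> 'cV[R]_nw) (yt : nat -> 'cV[R]_ny)
    (yt0 : 'cV[R]_ny) : Prop :=
  forall k : nat,
    let yprev := if k is k'.+1 then yt k' else yt0 in
    let y := C *m x k + D *m w k in
    let Ep := fun i => Eprime (lam i) (delta i) (yprev i 0 - y i 0) (y i 0) in
    exists S : {set 'I_ny},
      [/\ protocol_ok Dmin Dmax Ep S,
          forall i, yt k i 0 = (if i \in S then y i 0 else yprev i 0) &
          x k.+1 = A *m x k
                   + B *m (gsK Dmin Dmax K1 K2 (Eval Dmin Dmax (Emax Ep)) *m yt k)].

(* selection for p in {1,2} encoded as 'I_2 (0 ~ 1, 1 ~ 2) *)
Definition sel T (p : 'I_2) (a b : T) : T := if val p == 0%N then a else b.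

(* Lambda_j = diag(lambda_i j_i), j_i = 1 if j i, -1 otherwise *)
Definition Lambda ny (lam : 'I_ny -> R) (j : 'I_ny -> bool) : 'M[R]_ny :=
  diag_mx (\row_i (lam i * (if j i then 1 else -1))).

Definition diag3 n1 n2 n3 (M1 : 'M[R]_n1) (M2 : 'M[R]_n2) (M3 : 'M[R]_n3)
  : 'M[R]_(n1 + (n2 + n3)) := block_mx M1 0 0 (block_mx M2 0 0 M3).

Section LMI.
Variables (nx nu ny nw nz : nat).
Variables (A : 'M[R]_nx) (B : 'M[R]_(nx, nu)) (C : 'M[R]_(ny, nx))
  (D : 'M[R]_(ny, nw)) (F : 'M[R]_(nz, nx)) (Kp : 'M[R]_(nu, ny))
  (Dp sigma gamma : R) (Lam : 'M[R]_ny) (Pp Pq : 'M[R]_nx) (Lq Mq Nq Zq : 'M[R]_ny).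

Definition Nplus : 'M[R]_ny := Nq + Nq^T.
Definition Nminus : 'M[R]_ny := Nq - Nq^T.
Definition Rmat : 'M[R]_(ny + ny) :=
  block_mx (Lq + Mq + Nplus) (Lq - Mq - Nminus) (Lq - Mq - Nminus)^T (Lq + Mq + Zq).
Definition Gam : 'M[R]_(nx + (nw + ny)) :=
  diag3 (sigma ^+ 2 *: Pp) (gamma ^+ 2 *: (1%:M : 'M[R]_nw)) (Nplus + Zq).
Definition Xi : 'M[R]_(nx + (nz + (ny + ny))) :=
  diag3 Pq (1%:M : 'M[R]_nz) Rmat.
Definition Gmat_row1 : 'M[R]_(nx, nx + (nw + ny)) :=
  row_mx (A + B *m Kp *m C) (row_mx (B *m Kp *m D) (B *m Kp)).
Definition Gmat_row2 : 'M[R]_(nz, nx + (nw + ny)) :=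
  row_mx F (row_mx (0 : 'M[R]_(nz, nw)) (0 : 'M[R]_(nz, ny))).
Definition Gmat_row3 : 'M[R]_(ny, nx + (nw + ny)) :=
  row_mx (Dp *: (Lam *m C)) (row_mx (Dp *: (Lam *m D)) (0 : 'M[R]_ny)).
Definition Gmat_row4 : 'M[R]_(ny, nx + (nw + ny)) :=
  row_mx (0 : 'M[R]_(ny, nx)) (row_mx (0 : 'M[R]_(ny, nw)) (1%:M : 'M[R]_ny)).
Definition Gmat : 'M[R]_(nx + (nz + (ny + ny)), nx + (nw + ny)) :=
  col_mx Gmat_row1 (col_mx Gmat_row2 (col_mx Gmat_row3 Gmat_row4)).
Definition Phi : 'M[R]_(nx + (nw + ny), nx + (nz + (ny + ny))) := Gmat^T *m Xi.
Definition lmi_mat : 'M[R]_((nx + (nw + ny)) + (nx + (nz + (ny + ny)))) :=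
  block_mx Gam Phi Phi^T Xi.
End LMI.

End Defs.

(* Main.v *)
Require Import Defs.
From HB Require Import structures.
From mathcomp Require Import all_boot all_order all_algebra.
From mathcomp Require Import all_classical all_reals.
From mathcomp Require Import topology normedtype sequences.
From mathcomp Require Import ring lra.
Import Order.TTheory GRing.Theory Num.Theory.
Import numFieldNormedType.Exports.
Set Implicit Arguments. Unset Strict Implicit. Unset Printing Implicit Defensive.
Local Open Scope ring_scope.
Section BF.
Variable R : realType.

Definition bf m n (M : 'M[R]_(m, n)) (u : 'cV[R]_m) (v : 'cV[R]_n) : R :=
  (u^T *m M *m v) 0 0.
Definition qf n (M : 'M[R]_n) (v : 'cV[R]_n) : R := bf M v v.
Definition nsq n (v : 'cV[R]_n) : R := \sum_i v i 0 ^+ 2.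

Lemma bfE m n (M : 'M[R]_(m, n)) u v :
  bf M u v = \sum_i \sum_j u i 0 * M i j * v j 0.
Proof.
rewrite /bf mxE.
transitivity (\sum_j \sum_i u i 0 * M i j * v j 0); last by rewrite exchange_big.
by apply: eq_bigr => j _; rewrite mxE big_distrl; apply: eq_bigr => i _; rewrite !mxE.
Qed.
Lemma bfE_old : True.
Proof.
by [].
Qed.

Lemma bfDl m n (M1 M2 : 'M[R]_(m, n)) u v : bf (M1 + M2) u v = bf M1 u v + bf M2 u v.
Proof. by rewrite /bf mulmxDr mulmxDl !mxE. Qed.
Lemma bfBl m n (M1 M2 : 'M[R]_(m, n)) u v : bf (M1 - M2) u v = bf M1 u v - bf M2 u v.
Proof. by rewrite /bf mulmxBr mulmxBl !mxE. Qed.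
Lemma bfZl m n (c : R) (M : 'M[R]_(m, n)) u v : bf (c *: M) u v = c * bf M u v.
Proof. by rewrite /bf -scalemxAr -scalemxAl !mxE. Qed.
Lemma bfDu m n (M : 'M[R]_(m, n)) u1 u2 v : bf M (u1 + u2) v = bf M u1 v + bf M u2 v.
Proof. by rewrite /bf linearD /= !mulmxDl !mxE. Qed.
Lemma bfBu m n (M : 'M[R]_(m, n)) u1 u2 v : bf M (u1 - u2) v = bf M u1 v - bf M u2 v.
Proof. by rewrite /bf linearB /= !mulmxBl !mxE. Qed.
Lemma bfZu m n (M : 'M[R]_(m, n)) (c : R) u v : bf M (c *: u) v = c * bf M u v.
Proof. by rewrite /bf linearZ /= -!scalemxAl !mxE. Qed.
Lemma bfDv m n (M : 'M[R]_(m, n)) u v1 v2 : bf M u (v1 + v2) = bf M u v1 + bf M u v2.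
Proof. by rewrite /bf mulmxDr !mxE. Qed.
Lemma bfBv m n (M : 'M[R]_(m, n)) u v1 v2 : bf M u (v1 - v2) = bf M u v1 - bf M u v2.
Proof. by rewrite /bf mulmxBr !mxE. Qed.
Lemma bfZv m n (M : 'M[R]_(m, n)) (c : R) u v : bf M u (c *: v) = c * bf M u v.
Proof. by rewrite /bf -scalemxAr !mxE. Qed.
Lemma bfNu m n (M : 'M[R]_(m, n)) u v : bf M (- u) v = - bf M u v.
Proof. by rewrite -scaleN1r bfZu mulN1r. Qed.
Lemma bf0l m n u v : bf (0 : 'M[R]_(m, n)) u v = 0.
Proof. by rewrite /bf mulmx0 mul0mx mxE. Qed.
Lemma bf0u m n (M : 'M[R]_(m, n)) v : bf M 0 v = 0.
Proof. by rewrite /bf linear0 !mul0mx mxE. Qed.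
Lemma bf0v m n (M : 'M[R]_(m, n)) u : bf M u 0 = 0.
Proof. by rewrite /bf mulmx0 mxE. Qed.
Lemma bf_tr m n (M : 'M[R]_(m, n)) u v : bf M^T u v = bf M v u.
Proof.
rewrite !bfE exchange_big /=; apply: eq_bigr => i _; apply: eq_bigr => j _.
by rewrite mxE; ring.
Qed.
Lemma bf_mulr m n p (M : 'M[R]_(m, n)) (G : 'M[R]_(n, p)) u v :
  bf (M *m G) u v = bf M u (G *m v).
Proof. by rewrite /bf !mulmxA. Qed.
Lemma bf_mull m n p (G : 'M[R]_(m, n)) (M : 'M[R]_(n, p)) u v :
  bf (G *m M) u v = bf M (G^T *m u) v.
Proof. by rewrite /bf trmx_mul trmxK !mulmxA. Qed.
Lemma bf1 n (u v : 'cV[R]_n) : bf 1%:M u v = \sum_i u i 0 * v i 0.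
Proof. by rewrite /bf mulmx1 mxE; apply: eq_bigr => i _; rewrite mxE. Qed.
Lemma qf1 n (v : 'cV[R]_n) : qf 1%:M v = nsq v.
Proof. by rewrite /qf bf1; apply: eq_bigr => i _; rewrite expr2. Qed.

Lemma bf_block m1 m2 n1 n2 (A : 'M[R]_(m1, n1)) (B : 'M[R]_(m1, n2))
   (C : 'M[R]_(m2, n1)) (D : 'M[R]_(m2, n2)) u1 u2 v1 v2 :
  bf (block_mx A B C D) (col_mx u1 u2) (col_mx v1 v2) =
  bf A u1 v1 + bf B u1 v2 + bf C u2 v1 + bf D u2 v2.
Proof.
rewrite /bf tr_col_mx mul_row_block mul_row_col !mulmxDl !mxE.
ring.
Qed.

Lemma nsq_col m n (u : 'cV[R]_m) (v : 'cV[R]_n) : nsq (col_mx u v) = nsq u + nsq v.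
Proof.
by rewrite /nsq big_split_ord /=; congr (_ + _); apply: eq_bigr => i _;
  rewrite ?col_mxEu ?col_mxEd.
Qed.

Lemma nsq_ge0 n (v : 'cV[R]_n) : 0 <= nsq v.
Proof. by apply: sumr_ge0 => i _; rewrite sqr_ge0. Qed.

Lemma nsq_coord n (v : 'cV[R]_n) i : v i 0 ^+ 2 <= nsq v.
Proof.
rewrite /nsq (bigD1 i) //= lerDl; apply: sumr_ge0 => j _; exact: sqr_ge0.
Qed.

Lemma vnorm_sq n (v : 'cV[R]_n) : vnorm v ^+ 2 = nsq v.
Proof. by rewrite /vnorm sqr_sqrtr // nsq_ge0. Qed.

Lemma vnorm_ge0 n (v : 'cV[R]_n) : 0 <= vnorm v.
Proof. exact: sqrtr_ge0. Qed.

Lemma coord_le_vnorm n (v : 'cV[R]_n) i : `|v i 0| <= vnorm v.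
Proof.
rewrite -(ler_pXn2r (_ : 0 < 2)%N) ?nnegrE ?vnorm_ge0 //.
by rewrite real_normK ?num_real // vnorm_sq nsq_coord.
Qed.

Lemma sum_ge_term (I : finType) (f : I -> R) i : (forall j, 0 <= f j) -> f i <= \sum_j f j.
Proof. by move=> H; rewrite (bigD1 i) //= lerDl; apply: sumr_ge0. Qed.

Definition absum m n (M : 'M[R]_(m, n)) : R := \sum_i \sum_j `|M i j|.

Lemma absum_ge0 m n (M : 'M[R]_(m, n)) : 0 <= absum M.
Proof. by apply: sumr_ge0 => i _; apply: sumr_ge0. Qed.

Lemma qf_ub n (M : 'M[R]_n) v : qf M v <= absum M * nsq v.
Proof.
rewrite /qf bfE /absum big_distrl /=; apply: ler_sum => i _.
rewrite big_distrl /=; apply: ler_sum => j _.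
have h1 := nsq_coord v i; have h2 := nsq_coord v j.
have h3 : v i 0 * v j 0 <= nsq v.
  have := sqr_ge0 (v i 0 - v j 0); rewrite sqrrB; lra.
have h4 : - (v i 0 * v j 0) <= nsq v.
  have := sqr_ge0 (v i 0 + v j 0); rewrite sqrrD; lra.
have hM := normr_ge0 (M i j).
rewrite (_ : v i 0 * M i j * v j 0 = M i j * (v i 0 * v j 0)); last by ring.
case: (lerP 0 (M i j)) => hm.
  rewrite ger0_norm //; exact: ler_wpM2l.
rewrite ltr0_norm //.
rewrite (_ : M i j * (v i 0 * v j 0) = (- M i j) * (- (v i 0 * v j 0))); last by ring.
apply: ler_wpM2l => //; lra.
Qed.

End BF.

Section Coercive.
Variable R : realType.

Lemma bf_row1 n (X : 'M[R]_(1, n)) (t : 'cV[R]_1) v : bf X t v = t 0 0 * (X *m v) 0 0.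
Proof. by rewrite /bf -mulmxA mxE big_ord1 mxE. Qed.

Lemma nsq1 (t : 'cV[R]_1) : nsq t = t 0 0 ^+ 2.
Proof. by rewrite /nsq big_ord1. Qed.

Lemma qf0 n (M : 'M[R]_n) : qf M 0 = 0.
Proof. by rewrite /qf bf0u. Qed.

Lemma coercive_step n (M : 'M[R]_(1 + n)) :
  (forall M' : 'M[R]_n, posdef M' -> exists2 e, 0 < e & forall v, e * nsq v <= qf M' v) ->
  posdef M -> exists2 e, 0 < e & forall v, e * nsq v <= qf M v.
Proof.
move=> IH [HMs HMp].
set a' := ulsubmx M; set b := ursubmx M; set c := dlsubmx M; set d := drsubmx M.
have HM : M = block_mx a' b c d by rewrite submxK.
have [ha hc hb hd] : [/\ a'^T = a', c^T = b, b^T = c & d^T = d].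
  by apply/eq_block_mx; rewrite -tr_block_mx -HM.
set a := a' 0 0.
have key : forall t u, qf M (col_mx t u) =
    a * t 0 0 ^+ 2 + 2 * t 0 0 * (b *m u) 0 0 + qf d u.
  move=> t u; rewrite /qf HM bf_block -hb bf_tr !bf_row1.
  rewrite [(a' *m t) 0 0]mxE (big_ord_recl 0) big_ord0 /a. ring.
have qbb : forall u, qf (c *m b) u = (b *m u) 0 0 ^+ 2.
  move=> u; rewrite /qf bf_mull hc bf_row1.
  by rewrite expr2.
have ha0 : 0 < a.
  have := HMp (col_mx 1%:M 0).
  have -> : (col_mx 1%:M (0 : 'cV[R]_n) : 'cV_(1 + n)) != 0.
    by rewrite col_mx_eq0 negb_and oner_eq0.
  move=> /(_ isT); rewrite -/(bf M _ _) -/(qf M _) key qf0 mulmx0 !mxE /=.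
  by rewrite expr1n mulr1 mulr0 !addr0.
set M' := d - a^-1 *: (c *m b).
have qM' : forall u, qf M' u = qf d u - a^-1 * (b *m u) 0 0 ^+ 2.
  by move=> u; rewrite -qbb /qf bfBl bfZl.
have pM' : posdef M'.
  split.
    by rewrite /M' linearB /= linearZ /= trmx_mul hd hc hb.
  move=> u hu.
  change (0 < qf M' u); rewrite qM'.
  set t : 'cV[R]_1 := (- (b *m u) 0 0 / a)%:M.
  have := HMp (col_mx t u).
  have -> : (col_mx t u : 'cV_(1 + n)) != 0 by rewrite col_mx_eq0 negb_and hu orbT.
  move=> /(_ isT) H0.
  have {H0} : 0 < qf M (col_mx t u) := H0.
  rewrite key.
  rewrite /t mxE /=.
  have ha1 : a != 0 by rewrite gt_eqF.
  set be := (b *m u) 0 0.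
  have -> : a * (- be / a) ^+ 2 + 2 * (- be / a) * be + qf d u =
            qf d u - a^-1 * be ^+ 2 by field.
  by [].
have [e' he' He'] := IH _ pM'.
set K := absum (c *m b).
have hK : 0 <= K by apply: absum_ge0.
set c1 := 2 / a; set c2 := (1 + 2 * K / a ^+ 2) / e'.
have hc1 : 0 < c1 by rewrite divr_gt0.
have hc2 : 0 < c2.
  rewrite divr_gt0 // ltr_wpDr // mulr_ge0 // ?mulr_ge0 // invr_ge0 exprn_ge0 // ltW //.
exists (c1 + c2)^-1; first by rewrite invr_gt0 addr_gt0.
move=> v; rewrite -[v]vsubmxK key nsq_col nsq1.
set t0 := usubmx v 0 0; set u := dsubmx v.
set be := (b *m u) 0 0.
have hbe : be ^+ 2 <= K * nsq u by rewrite -qbb qf_ub.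
have hNu := nsq_ge0 u.
have hqd : qf d u = qf M' u + a^-1 * be ^+ 2.
  by rewrite qM' subrK.
have HM'u := He' u.
set s := t0 + be / a.
have hexp : a * t0 ^+ 2 + 2 * t0 * be + qf d u = a * s ^+ 2 + qf M' u.
  rewrite hqd /s; field; by rewrite gt_eqF.
rewrite hexp.
have ht0 : t0 ^+ 2 <= 2 * s ^+ 2 + 2 * K * nsq u / a ^+ 2.
  have -> : t0 = s - be / a by rewrite /s; ring.
  have h1 : (s - be / a) ^+ 2 <= 2 * s ^+ 2 + 2 * (be / a) ^+ 2.
    have := sqr_ge0 (s + be / a); rewrite sqrrB sqrrD; lra.
  apply: (le_trans h1); rewrite lerD2l expr_div_n.
  have h2 : be ^+ 2 / a ^+ 2 <= K * nsq u / a ^+ 2.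
    by rewrite ler_pM2r // invr_gt0 exprn_gt0.
  have -> : 2 * K * nsq u / a ^+ 2 = 2 * (K * nsq u / a ^+ 2) by ring.
  lra.
have hs := sqr_ge0 s.
have H1 : t0 ^+ 2 + nsq u <= (c1 + c2) * (a * s ^+ 2 + e' * nsq u).
  have E1 : c1 * (a * s ^+ 2) = 2 * s ^+ 2 by rewrite /c1; field; rewrite gt_eqF.
  have E2 : c2 * (e' * nsq u) = nsq u + 2 * K * nsq u / a ^+ 2.
    by rewrite /c2; field; rewrite (gt_eqF ha0) (gt_eqF he').
  have E3 : 0 <= c1 * (e' * nsq u) := mulr_ge0 (ltW hc1) (mulr_ge0 (ltW he') hNu).
  have E4 : 0 <= c2 * (a * s ^+ 2) := mulr_ge0 (ltW hc2) (mulr_ge0 (ltW ha0) hs).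
  rewrite mulrDl !mulrDr E1 E2; lra.
rewrite ler_pdivrMl ?addr_gt0 //.
apply: (le_trans H1); rewrite ler_pM2l ?addr_gt0 // lerD2l. done.
Qed.

Lemma coercive n (M : 'M[R]_n) :
  posdef M -> exists2 e, 0 < e & forall v, e * nsq v <= qf M v.
Proof.
elim: n M => [|n IH] M HM.
  exists 1 => // v; rewrite /nsq /qf bfE !big_ord0 mulr0 //.
exact: (coercive_step IH HM).
Qed.

End Coercive.

Section LMIlemmas.
Variable R : realType.

Lemma bfNv m n (M : 'M[R]_(m, n)) u v : bf M u (- v) = - bf M u v.
Proof. by rewrite -scaleN1r bfZv mulN1r. Qed.

Lemma bfNl m n (M : 'M[R]_(m, n)) u v : bf (- M) u v = - bf M u v.
Proof. by rewrite -scaleN1r bfZl mulN1r. Qed.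

Lemma schur_qf m k (Ga : 'M[R]_m) (G : 'M[R]_(k, m)) (Xs : 'M[R]_k) xi :
  qf (block_mx Ga (G^T *m Xs) (G^T *m Xs)^T Xs) (col_mx xi (- (G *m xi))) =
  qf Ga xi - qf Xs (G *m xi).
Proof.
rewrite /qf bf_block bf_tr !bf_mull trmxK !bfNu !bfNv opprK; ring.
Qed.

Lemma qf_diag3 n1 n2 n3 (M1 : 'M[R]_n1) (M2 : 'M[R]_n2) (M3 : 'M[R]_n3) a b c :
  qf (diag3 M1 M2 M3) (col_mx a (col_mx b c)) = qf M1 a + qf M2 b + qf M3 c.
Proof. rewrite /qf /diag3 !bf_block !bf0l; ring. Qed.

Lemma convex_qf n (X : 'M[R]_n) (al1 al2 : R) u v :
  (forall v, 0 <= qf X v) -> 0 <= al1 -> 0 <= al2 -> al1 + al2 = 1 ->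
  qf X (al1 *: u + al2 *: v) <= al1 * qf X u + al2 * qf X v.
Proof.
move=> HX h1 h2 h12.
have E : al1 * qf X u + al2 * qf X v - qf X (al1 *: u + al2 *: v) =
         al1 * al2 * qf X (u - v).
  rewrite /qf !(bfDu, bfDv, bfBu, bfBv, bfZu, bfZv, bfNu, bfNv).
  have -> : al2 = 1 - al1 by rewrite -h12; ring.
  ring.
have : 0 <= al1 * al2 * qf X (u - v) by rewrite mulr_ge0 ?mulr_ge0.
rewrite -E; lra.
Qed.

Lemma Rmat_split n (L M N Z : 'M[R]_n) a e :
  L^T = L -> M^T = M ->
  qf (Rmat L M N Z) (col_mx a e) =
  qf (block_mx L N N^T M) (col_mx (a + e) (a - e)) + qf (Nplus N + Z) e.
Proof.
move=> hL hM.
have sL : forall u v, bf L u v = bf L v u by move=> u v; rewrite -{1}hL bf_tr.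
have sM : forall u v, bf M u v = bf M v u by move=> u v; rewrite -{1}hM bf_tr.
rewrite /qf /Rmat /Nplus /Nminus !bf_block.
rewrite bf_tr.
rewrite !(bfDl, bfBl, bfNl, bfDu, bfBu, bfDv, bfBv, bfNu, bfNv, bf_tr).
rewrite (sL e a) (sM e a).
ring.
Qed.

Lemma S_lb k (W : 'M[R]_k) (u : 'cV[R]_k) (m U : R) :
  (forall a b, 0 <= W a b) -> 0 <= m ->
  (forall i, - m <= u i 0) -> (forall i, `|u i 0| <= U) ->
  - (2 * m * U * absum W) <= qf W u.
Proof.
move=> HW hm Hl Hu.
rewrite /qf bfE /absum mulr_sumr -sumrN; apply: ler_sum => i _.
rewrite mulr_sumr -sumrN; apply: ler_sum => j _.
rewrite ger0_norm //.
have hij : - (2 * (m * U)) <= u i 0 * u j 0.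
  have hi := Hl i; have hj := Hl j; have ai := Hu i; have aj := Hu j.
  have hi' := ler_norm (u i 0); have hj' := ler_norm (u j 0).
  have ni := normr_ge0 (u i 0); have nj := normr_ge0 (u j 0).
  have hU : 0 <= U by lra.
  have hmU : 0 <= m * U by rewrite mulr_ge0.
  case: (lerP 0 (u i 0)) => si; case: (lerP 0 (u j 0)) => sj.
  - have : 0 <= u i 0 * u j 0 by rewrite mulr_ge0.
    lra.
  - have h : u i 0 * (- u j 0) <= U * m.
      by apply: ler_pM => //; lra.
    rewrite mulrN mulrC in h; lra.
  - have h : (- u i 0) * u j 0 <= m * U.
      by apply: ler_pM => //; lra.
    rewrite mulNr in h; lra.
  - have : 0 <= u i 0 * u j 0 by rewrite nmulr_rge0 // ltW.
    lra.
have hW := HW i j.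
have := ler_wpM2l hW hij.
have -> : u i 0 * W i j * u j 0 = W i j * (u i 0 * u j 0) by ring.
move=> H; apply: le_trans H; rewrite le_eqVlt; apply/orP; left; apply/eqP; ring.
Qed.

End LMIlemmas.

Section Proto.
Variable R : realType.
Local Open Scope ereal_scope.

Lemma Eprime_le (lam del e y E : R) : (0 < lam)%R -> (0 <= del)%R -> (0 <= E)%R ->
  Eprime lam del e y <= E%:E -> (`|e| <= E * (lam * `|y|) + del)%R.
Proof.
move=> hl hd hE; rewrite /Eprime.
case: ifP => [hne|/negbFE/eqP h0].
  have hp : (0 < lam * `|y|)%R by rewrite lt_def hne mulr_ge0 // ltW.
  rewrite lee_fin ler_pdivrMr //; move=> h; rewrite -lerBlDr; lra.
case: ifP => [_|/negbT]; first by [].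
rewrite -leNgt h0 mulr0 add0r => h _; rewrite -subr_le0; lra.
Qed.

Lemma Emax_ge ny (Ep : 'I_ny -> \bar R) i : Ep i <= Emax Ep.
Proof. by rewrite /Emax (bigD1 i) //= le_max lexx. Qed.

Lemma Eval_range (Dmin Dmax : R) m : (Dmin <= Dmax)%R ->
  (Dmin <= Eval Dmin Dmax m <= Dmax)%R.
Proof.
move=> h; rewrite /Eval.
case: ifP => [_|/negbT h1]; first by rewrite lexx h.
case: ifP => [_|/negbT h2]; first by rewrite h lexx.
rewrite -leNgt in h1; rewrite -ltNge in h2.
move: h1 h2; case: m => [r| |] //=; rewrite ?lee_fin ?lte_fin => h1 h2.
by rewrite h1 ltW.
Qed.

Lemma protocol_bound (Dmin Dmax : R) ny (Ep : 'I_ny -> \bar R) S :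
  (Dmin < Dmax)%R -> protocol_ok Dmin Dmax Ep S ->
  forall i, i \notin S -> Ep i <= (Eval Dmin Dmax (Emax Ep))%:E.
Proof.
move=> hD [H1 H2 H3] i hi; have hge := Emax_ge Ep i.
rewrite /Eval.
case: ifP => [h|/negbT h1].
  by apply: (le_trans hge); apply: ltW.
case: ifP => [h|/negbT h2].
  move: hi; rewrite (H2 h) inE -ltNge => hlt; exact: ltW.
rewrite -leNgt in h1; rewrite -ltNge in h2.
apply: (le_trans hge).
move: h1 h2; case: (Emax Ep) => [r| |] //=.
Qed.

End Proto.

Section Model.
Variable R : realType.
Variables (nx nu ny nw nz : nat).
Variables (A : 'M[R]_nx) (B : 'M[R]_(nx, nu)) (C : 'M[R]_(ny, nx))
  (D : 'M[R]_(ny, nw)) (F : 'M[R]_(nz, nx)).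

Lemma Gmat_mul (Kp : 'M[R]_(nu, ny)) (Dp : R) (Lam : 'M[R]_ny)
  (x : 'cV[R]_nx) (w : 'cV[R]_nw) (e : 'cV[R]_ny) :
  Gmat A B C D F Kp Dp Lam *m col_mx x (col_mx w e) =
  col_mx (A *m x + B *m (Kp *m (C *m x + D *m w + e)))
   (col_mx (F *m x) (col_mx (Dp *: (Lam *m (C *m x + D *m w))) e)).
Proof.
rewrite /Gmat /Gmat_row1 /Gmat_row2 /Gmat_row3 /Gmat_row4 !mul_col_mx !mul_row_col.
rewrite !mul0mx !addr0 !add0r mul1mx.
congr col_mx.
  by rewrite !mulmxDr !mulmxDl !mulmxA !addrA.
by rewrite -!scalemxAl -scalerDr mulmxDr !mulmxA.
Qed.

Lemma Lambda_mul (lam : 'I_ny -> R) (y : 'cV[R]_ny) i :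
  (Lambda lam (fun i => 0 <= y i 0) *m y) i 0 = lam i * `|y i 0|.
Proof.
rewrite /Lambda mul_diag_mx mxE mxE.
case: (lerP 0 (y i 0)) => h.
  by rewrite ger0_norm // mulr1.
by rewrite ltr0_norm // mulrN1 mulNr mulrN.
Qed.

Lemma cl_step (K1 K2 : 'M[R]_(nu, ny)) (Dmin Dmax : R) (lam delta : 'I_ny -> R)
    x w yt yt0 :
  0 <= Dmin -> Dmin < Dmax -> (forall i, 0 < lam i) -> (forall i, 0 <= delta i) ->
  closed_loop A B C D K1 K2 Dmin Dmax lam delta x w yt yt0 ->
  forall k, exists E, [/\ Dmin <= E <= Dmax,
    (forall i, `|(yt k - (C *m x k + D *m w k)) i 0| <=
               E * (lam i * `|(C *m x k + D *m w k) i 0|) + delta i) &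
    x k.+1 = A *m x k + B *m (gsK Dmin Dmax K1 K2 E *m yt k)].
Proof.
move=> hDmin hD hl hdel Hcl k; have [S [Hp Hy Hx]] := Hcl k.
set E := Eval _ _ _ in Hx.
exists E; split => //.
  by apply: Eval_range; apply: ltW.
have hE := Eval_range (Emax
   (fun i => Eprime (lam i) (delta i)
    ((if k is k'.+1 then yt k' else yt0) i 0 - (C *m x k + D *m w k) i 0)
    ((C *m x k + D *m w k) i 0))) (ltW hD).
move=> i.
set y := C *m x k + D *m w k.
have -> : (yt k - y) i 0 = yt k i 0 - y i 0 by rewrite !mxE.
rewrite Hy.
have hE0 : 0 <= E by move/andP: hE => [h _]; exact: le_trans hDmin h.
case: ifP => hi.
  rewrite subrr normr0; apply: addr_ge0 (hdel i); apply: mulr_ge0 => //.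
  by rewrite mulr_ge0 // ltW.
apply: Eprime_le => //.
exact: (protocol_bound hD Hp (negbT hi)).
Qed.

End Model.

Section Aux.
Variable R : realType.

Lemma bigmin_prop (T : finType) (g : T -> R) : (forall t, 0 < g t) ->
  0 < \big[Num.min/1]_t g t /\ forall t, \big[Num.min/1]_t g t <= g t.
Proof.
move=> hg; split.
  by apply: (big_ind (fun x => 0 < x)) => //= a b ha hb; rewrite lt_min ha hb.
by move=> t; rewrite (bigD1 t) //= ge_min lexx.
Qed.

Lemma col_mx_all m n (Q : R -> Prop) (u1 : 'cV[R]_m) (u2 : 'cV[R]_n) :
  (forall i, Q (u1 i 0)) -> (forall i, Q (u2 i 0)) -> forall k, Q (col_mx u1 u2 k 0).
Proof.
move=> h1 h2 k; rewrite -[k]fintype.splitK; case: (fintype.split k) => i /=.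
  by rewrite col_mxEu.
by rewrite col_mxEd.
Qed.

End Aux.

Section Step.
Variable R : realType.
Variables (nx nu ny nw nz : nat).
Variables (A : 'M[R]_nx) (B : 'M[R]_(nx, nu)) (C : 'M[R]_(ny, nx))
  (D : 'M[R]_(ny, nw)) (F : 'M[R]_(nz, nx)) (K1 K2 : 'M[R]_(nu, ny))
  (Dmin Dmax : R) (lam : 'I_ny -> R) (sigma gamma : R)
  (P : 'I_2 -> 'M[R]_nx)
  (L M N Z : 'I_2 -> ('I_ny -> bool) -> 'M[R]_ny).
Hypotheses (hDmin : 0 <= Dmin) (hD : Dmin < Dmax) (hlam : forall i, 0 < lam i)
  (hsig : 0 < sigma) (hsig1 : sigma <= 1) (hgam : 0 < gamma)
  (HP : forall p, posdef (P p))
  (HW : forall p j, let W := block_mx (L p j) (N p j) (N p j)^T (M p j) in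
     W^T = W /\ forall a b, 0 <= W a b)
  (HZ : forall p j, (Z p j)^T = Z p j)
  (Hlmi : forall (p q : 'I_2) (j : 'I_ny -> bool),
     posdef (lmi_mat A B C D F (sel p K1 K2) (sel p Dmin Dmax) sigma gamma
               (Lambda lam j) (P p) (P q) (L q j) (M q j) (N q j) (Z q j))).

Definition LMI p q j := lmi_mat A B C D F (sel p K1 K2) (sel p Dmin Dmax) sigma gamma
               (Lambda lam j) (P p) (P q) (L q j) (M q j) (N q j) (Z q j).

Lemma ffun_fun (j : 'I_ny -> bool) : fun_of_fin [ffun i => j i] = j.
Proof. by apply: funext => i; rewrite ffunE. Qed.

Lemma eps_unif : exists2 eps, 0 < eps &
  forall p q j v, eps * nsq v <= qf (LMI p q j) v.
Proof.
pose T := ('I_2 * 'I_2 * {ffun 'I_ny -> bool})%type.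
have H : forall t : T, exists e : R, 0 < e /\
    forall v, e * nsq v <= qf (LMI t.1.1 t.1.2 t.2) v.
  move=> t; have [e he He] := coercive (Hlmi t.1.1 t.1.2 t.2).
  by exists e.
have [g Hg] := choice H.
have [h1 h2] := bigmin_prop (fun t => (Hg t).1).
exists (\big[Num.min/1]_t g t) => // p q j v.
have := (Hg (p, q, [ffun i => j i])).2 v; rewrite /= ffun_fun => Hv.
apply: le_trans Hv; apply: ler_wpM2r; first exact: nsq_ge0.
have := h2 (p, q, [ffun i => j i]); by [].
Qed.

Definition Wm q j := block_mx (L q j) (N q j) (N q j)^T (M q j).
Definition Wmax := \sum_q \sum_(f : {ffun 'I_ny -> bool}) absum (Wm q f).

Lemma Wmax_ge q j : absum (Wm q j) <= Wmax.
Proof.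
rewrite -(ffun_fun j) /Wmax.
have h1 := @sum_ge_term R _ (fun f : {ffun 'I_ny -> bool} => absum (Wm q f))
  [ffun i => j i] (fun f => absum_ge0 _).
have h2 := @sum_ge_term R _ (fun q => \sum_(f : {ffun 'I_ny -> bool}) absum (Wm q f)) q
  (fun q => sumr_ge0 _ (fun f _ => absum_ge0 _)).
exact: le_trans h1 h2.
Qed.

Lemma Wmax_ge0 : 0 <= Wmax.
Proof. by apply: sumr_ge0 => q _; apply: sumr_ge0 => f _; exact: absum_ge0. Qed.

Definition p1 : 'I_2 := ord0.
Definition p2 : 'I_2 := ord_max.
Definition V (x : 'cV[R]_nx) := Num.max (qf (P p1) x) (qf (P p2) x).

Lemma qfZ n (c : R) (Mx : 'M[R]_n) v : qf (c *: Mx) v = c * qf Mx v.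
Proof. by rewrite /qf bfZl. Qed.

Lemma mix2 (a1 a2 g1 g2 t : R) : 0 <= a1 -> 0 <= a2 -> a1 + a2 = 1 ->
  t <= g1 -> t <= g2 -> t <= a1 * g1 + a2 * g2.
Proof.
move=> h1 h2 h12 t1 t2.
have k1 := ler_wpM2l h1 t1; have k2 := ler_wpM2l h2 t2.
have E : t = a1 * t + a2 * t by rewrite -mulrDl h12 mul1r.
rewrite {1}E; lra.
Qed.

Lemma sel1 T (a b : T) : sel p1 a b = a. Proof. by []. Qed.
Lemma sel2 T (a b : T) : sel p2 a b = b. Proof. by []. Qed.

Lemma step (eps : R) (heps : 0 < eps)
  (Heps : forall p q j v, eps * nsq v <= qf (LMI p q j) v)
  (x : 'cV[R]_nx) (w : 'cV[R]_nw) (yt : 'cV[R]_ny) (E m U : R) (del : 'I_ny -> R)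
  (q : 'I_2) :
  Dmin <= E <= Dmax -> 0 <= m -> 0 <= U -> (forall i, del i <= m) ->
  (forall i, `|(yt - (C *m x + D *m w)) i 0| <=
             E * (lam i * `|(C *m x + D *m w) i 0|) + del i) ->
  (forall i, E * (lam i * `|(C *m x + D *m w) i 0|) +
             `|(yt - (C *m x + D *m w)) i 0| <= U) ->
  qf (P q) (A *m x + B *m (gsK Dmin Dmax K1 K2 E *m yt)) + nsq (F *m x)
   <= sigma ^+ 2 * V x + gamma ^+ 2 * nsq w
      - eps * (nsq x + nsq w + nsq (yt - (C *m x + D *m w))) + 2 * m * U * Wmax.
Proof.
move=> /andP[hE1 hE2] hm hU hdel Hb HU.
set y := C *m x + D *m w; set e := yt - y.
have hyt : C *m x + D *m w + e = yt by rewrite /e addrC subrK.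
set j := fun i => 0 <= y i 0.
set xi := col_mx x (col_mx w e).
set G := fun p => Gmat A B C D F (sel p K1 K2) (sel p Dmin Dmax) (Lambda lam j).
have Gp : forall p, G p *m xi = col_mx (A *m x + B *m (sel p K1 K2 *m yt))
    (col_mx (F *m x) (col_mx (sel p Dmin Dmax *: (Lambda lam j *m y)) e)).
  by move=> p; rewrite /G Gmat_mul hyt.
set Xq := Xi nz (P q) (L q j) (M q j) (N q j) (Z q j).
set NZ := qf (Nplus (N q j) + Z q j) e.
have key : forall p, eps * nsq xi <=
    sigma ^+ 2 * qf (P p) x + gamma ^+ 2 * nsq w + NZ - qf Xq (G p *m xi).
  move=> p; have := Heps p q j (col_mx xi (- (G p *m xi))).
  rewrite /LMI /lmi_mat /Phi schur_qf nsq_col /Gam /xi qf_diag3 !qfZ qf1 -/xi.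
  have := nsq_ge0 (- (G p *m xi)).
  have := ltW heps => he h0 h.
  apply: le_trans h; rewrite mulrDr lerDl; exact: mulr_ge0.
have Xpsd : forall v, 0 <= qf Xq v.
  move=> v; have := Heps p1 q j (col_mx 0 v).
  rewrite /LMI /lmi_mat /qf bf_block !bf0u !bf0v !add0r => h.
  apply: le_trans h; apply: mulr_ge0; [exact: ltW | exact: nsq_ge0].
have hDD : 0 < Dmax - Dmin by rewrite subr_gt0.
set a1 := (Dmax - E) / (Dmax - Dmin).
set a2 := (E - Dmin) / (Dmax - Dmin).
have ha1 : 0 <= a1 by rewrite divr_ge0 // ?subr_ge0 // ltW.
have ha2 : 0 <= a2 by rewrite divr_ge0 // ?subr_ge0 // ltW.
have ha12 : a1 + a2 = 1 by rewrite /a1 /a2; field; rewrite gt_eqF.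
have haE : a1 * Dmin + a2 * Dmax = E by rewrite /a1 /a2; field; rewrite gt_eqF.
have heta : a1 *: (G p1 *m xi) + a2 *: (G p2 *m xi) =
   col_mx (A *m x + B *m (gsK Dmin Dmax K1 K2 E *m yt))
     (col_mx (F *m x) (col_mx (E *: (Lambda lam j *m y)) e)).
  rewrite !Gp !sel1 !sel2 !scale_col_mx !add_col_mx.
  congr (col_mx _ (col_mx _ (col_mx _ _))).
  - rewrite /gsK -/a1 -/a2 mulmxDl mulmxDr -!scalemxAl -!scalemxAr !scalerDr.
    rewrite -{3}(scale1r (A *m x)) -ha12 scalerDl.
    by rewrite addrACA.
  - by rewrite -scalerDl ha12 scale1r.
  - by rewrite !scalerA -scalerDl haE.
  - by rewrite -scalerDl ha12 scale1r.
have hconv := convex_qf (G p1 *m xi) (G p2 *m xi) Xpsd ha1 ha2 ha12.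
rewrite heta in hconv.
have [hWs hWp] := HW q j.
have [hL _ _ hM] : [/\ (L q j)^T = L q j, (N q j)^T^T = N q j, (N q j)^T = (N q j)^T
    & (M q j)^T = M q j].
  by apply/eq_block_mx; rewrite -tr_block_mx hWs.
set a := E *: (Lambda lam j *m y).
have hai : forall i, a i 0 = E * (lam i * `|y i 0|).
  by move=> i; rewrite /a mxE Lambda_mul.
have hXq : qf Xq (col_mx (A *m x + B *m (gsK Dmin Dmax K1 K2 E *m yt))
     (col_mx (F *m x) (col_mx a e))) =
     qf (P q) (A *m x + B *m (gsK Dmin Dmax K1 K2 E *m yt)) + nsq (F *m x)
     + qf (Wm q j) (col_mx (a + e) (a - e)) + NZ.
  by rewrite /Xq /Xi qf_diag3 qf1 Rmat_split // /Wm /NZ; ring.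
rewrite hXq in hconv.
have hS : - (2 * m * U * absum (Wm q j)) <= qf (Wm q j) (col_mx (a + e) (a - e)).
  apply: S_lb => //.
  - apply: (col_mx_all (Q := fun r => - m <= r)) => i;
      rewrite ?[(a + e) i 0]mxE ?[(a - e) i 0]mxE ?[(- e) i 0]mxE hai.
      have h1 := ler_norm (e i 0); have h2 := ler_norm (- e i 0).
      rewrite normrN in h2; have := Hb i; have := hdel i; rewrite -/y -/e; lra.
    have h1 := ler_norm (e i 0); have h2 := ler_norm (- e i 0).
    rewrite normrN in h2; have := Hb i; have := hdel i; rewrite -/y -/e; lra.
  - apply: (col_mx_all (Q := fun r => `|r| <= U)) => i;
      rewrite ?[(a + e) i 0]mxE ?[(a - e) i 0]mxE ?[(- e) i 0]mxE hai.
      have := HU i; rewrite -/y -/e => hu; apply: le_trans hu.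
      apply: le_trans (ler_normD _ _) _; rewrite lerD2r ger0_norm //.
      by rewrite mulr_ge0 ?mulr_ge0 ?(le_trans hDmin hE1) // ltW.
    have := HU i; rewrite -/y -/e => hu; apply: le_trans hu.
    apply: le_trans (ler_normB _ _) _; rewrite lerD2r ger0_norm //.
    by rewrite mulr_ge0 ?mulr_ge0 ?(le_trans hDmin hE1) // ltW.
have hW2 : 2 * m * U * absum (Wm q j) <= 2 * m * U * Wmax.
  apply: ler_wpM2l; last exact: Wmax_ge.
  by rewrite mulr_ge0 ?mulr_ge0.
have hmix := mix2 ha1 ha2 ha12 (key p1) (key p2).
have hV : a1 * qf (P p1) x + a2 * qf (P p2) x <= V x.
  have h1 : qf (P p1) x <= V x by rewrite /V le_max lexx.
  have h2 : qf (P p2) x <= V x by rewrite /V le_max lexx orbT.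
  have k1 := ler_wpM2l ha1 h1; have k2 := ler_wpM2l ha2 h2.
  have EV : V x = a1 * V x + a2 * V x by rewrite -mulrDl ha12 mul1r.
  rewrite [in X in _ <= X]EV; lra.
have hsV := ler_wpM2l (exprn_ge0 2 (ltW hsig)) hV.
have hxi : nsq xi = nsq x + nsq w + nsq e by rewrite /xi !nsq_col addrA.
rewrite hxi in hmix.
have Eg : a1 * (sigma ^+ 2 * qf (P p1) x + gamma ^+ 2 * nsq w + NZ - qf Xq (G p1 *m xi)) +
          a2 * (sigma ^+ 2 * qf (P p2) x + gamma ^+ 2 * nsq w + NZ - qf Xq (G p2 *m xi)) =
          sigma ^+ 2 * (a1 * qf (P p1) x + a2 * qf (P p2) x) + gamma ^+ 2 * nsq w + NZ
          - (a1 * qf Xq (G p1 *m xi) + a2 * qf Xq (G p2 *m xi)).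
  have -> : a2 = 1 - a1 by rewrite -ha12; ring.
  ring.
rewrite Eg in hmix.
lra.
Qed.

End Step.

Section Main.
Variable R : realType.
Variables (nx nu ny nw nz : nat).
Variables (A : 'M[R]_nx) (B : 'M[R]_(nx, nu)) (C : 'M[R]_(ny, nx))
  (D : 'M[R]_(ny, nw)) (F : 'M[R]_(nz, nx)) (K1 K2 : 'M[R]_(nu, ny))
  (Dmin Dmax : R) (lam : 'I_ny -> R) (sigma gamma : R)
  (P : 'I_2 -> 'M[R]_nx)
  (L M N Z : 'I_2 -> ('I_ny -> bool) -> 'M[R]_ny).
Hypotheses (hDmin : 0 <= Dmin) (hD : Dmin < Dmax) (hlam : forall i, 0 < lam i)
  (hsig : 0 < sigma) (hsig1 : sigma <= 1) (hgam : 0 < gamma)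
  (HP : forall p, posdef (P p))
  (HW : forall p j, let W := block_mx (L p j) (N p j) (N p j)^T (M p j) in
     W^T = W /\ forall a b, 0 <= W a b)
  (HZ : forall p j, (Z p j)^T = Z p j)
  (Hlmi : forall (p q : 'I_2) (j : 'I_ny -> bool),
     posdef (lmi_mat A B C D F (sel p K1 K2) (sel p Dmin Dmax) sigma gamma
               (Lambda lam j) (P p) (P q) (L q j) (M q j) (N q j) (Z q j))).

Lemma V_bounds : exists2 cp, 0 < cp & exists2 cP, 0 < cP &
  forall x, cp * nsq x <= V P x /\ V P x <= cP * nsq x.
Proof.
have [c1 hc1 H1] := coercive (HP p1).
have [c2 hc2 H2] := coercive (HP p2).
exists (Num.min c1 c2); first by rewrite lt_min hc1 hc2.
exists (absum (P p1) + absum (P p2) + 1).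
  by rewrite ltr_wpDl // addr_ge0 // absum_ge0.
move=> x; have hn := nsq_ge0 x; split.
  rewrite /V le_max; apply/orP; left; apply: le_trans (H1 x).
  by apply: ler_wpM2r => //; rewrite ge_min lexx.
have a1 := absum_ge0 (P p1); have a2 := absum_ge0 (P p2).
rewrite /V ge_max; apply/andP; split.
  apply: le_trans (qf_ub _ _) _; apply: ler_wpM2r => //; lra.
apply: le_trans (qf_ub _ _) _; apply: ler_wpM2r => //; lra.
Qed.

Lemma V0 : V P 0 = 0.
Proof. by rewrite /V !qf0 maxxx. Qed.

Lemma Vstep (eps : R) (heps : 0 < eps)
  (Heps : forall p q j v, eps * nsq v <= qf (LMI A B C D F K1 K2 Dmin Dmax lam sigma gamma P L M N Z p q j) v)
  (x : 'cV[R]_nx) (w : 'cV[R]_nw) (yt : 'cV[R]_ny) (E m U : R) (del : 'I_ny -> R) :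
  Dmin <= E <= Dmax -> 0 <= m -> 0 <= U -> (forall i, del i <= m) ->
  (forall i, `|(yt - (C *m x + D *m w)) i 0| <=
             E * (lam i * `|(C *m x + D *m w) i 0|) + del i) ->
  (forall i, E * (lam i * `|(C *m x + D *m w) i 0|) +
             `|(yt - (C *m x + D *m w)) i 0| <= U) ->
  V P (A *m x + B *m (gsK Dmin Dmax K1 K2 E *m yt)) + nsq (F *m x)
   <= sigma ^+ 2 * V P x + gamma ^+ 2 * nsq w
      - eps * (nsq x + nsq w + nsq (yt - (C *m x + D *m w))) + 2 * m * U * Wmax L M N.
Proof.
move=> hE hm hU hdel Hb HU.
have h1 := step hDmin hD hlam hsig HW heps Heps p1 hE hm hU hdel Hb HU.
have h2 := step hDmin hD hlam hsig HW heps Heps p2 hE hm hU hdel Hb HU.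
by rewrite {1}/V -lerBrDr ge_max !lerBrDr h1 h2.
Qed.

Lemma series_homo (u : nat -> R) : (forall n, 0 <= u n) ->
  {homo series u : n m / (n <= m)%N >-> n <= m}.
Proof. by move=> h; rewrite seriesEnat; apply: nondecreasing_series => n _ _. Qed.

Lemma series0 (u : nat -> R) : series u 0 = 0.
Proof. by rewrite seriesEnat /= big_geq. Qed.

Lemma nsq0 n : nsq (0 : 'cV[R]_n) = 0.
Proof. by rewrite /nsq big1 // => i _; rewrite mxE expr0n. Qed.

Lemma cl_Vstep0 (delta : 'I_ny -> R) (eps : R) (heps : 0 < eps)
  (Heps : forall p q j v, eps * nsq v <= qf (LMI A B C D F K1 K2 Dmin Dmax lam sigma gamma P L M N Z p q j) v)
  x w yt yt0 :
  (forall i, delta i = 0) ->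
  closed_loop A B C D K1 K2 Dmin Dmax lam delta x w yt yt0 ->
  forall k, V P (x k.+1) + nsq (F *m x k) <= sigma ^+ 2 * V P (x k) + gamma ^+ 2 * nsq (w k).
Proof.
move=> hd0 Hcl k.
have hdel : forall i, 0 <= delta i by move=> i; rewrite hd0.
have [E [hE Hb Hx]] := cl_step hDmin hD hlam hdel Hcl k.
set y := C *m x k + D *m w k in Hb; set e := yt k - y in Hb.
have hE0 : 0 <= E by move/andP: hE => [h _]; exact: le_trans hDmin h.
have hterm : forall i, 0 <= E * (lam i * `|y i 0|) + `|e i 0|.
  by move=> i; rewrite addr_ge0 // mulr_ge0 // mulr_ge0 // ltW.
set U := \sum_i (E * (lam i * `|y i 0|) + `|e i 0|).
have hU0 : 0 <= U by apply: sumr_ge0 => i _.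
have HU : forall i, E * (lam i * `|y i 0|) + `|e i 0| <= U.
  by move=> i; rewrite /U; exact: (sum_ge_term i hterm).
have := Vstep heps Heps (del := delta) hE (lexx 0) hU0 (fun i => ltac:(by rewrite hd0)) Hb HU.
rewrite -Hx -/y -/e !(mulr0, mul0r) addr0 => h.
apply: le_trans h _; rewrite lerBlDr lerDl; apply: mulr_ge0; first exact: ltW.
by rewrite !addr_ge0 // nsq_ge0.
Qed.

Lemma part3 (delta : 'I_ny -> R) : (forall i, delta i = 0) ->
   forall x w yt yt0,
     closed_loop A B C D K1 K2 Dmin Dmax lam delta x w yt yt0 ->
     x 0%N = 0 ->
     cvgn (series (fun k => vnorm (w k) ^+ 2)) ->
     cvgn (series (fun k => vnorm (F *m x k) ^+ 2)) /\
     Num.sqrt (limn (series (fun k => vnorm (F *m x k) ^+ 2)))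
       <= gamma * Num.sqrt (limn (series (fun k => vnorm (w k) ^+ 2))).
Proof.
move=> hd0 x w yt yt0 Hcl hx0 Hw.
have [eps heps Heps] := eps_unif Hlmi.
have [cp hcp [cP hcP HV]] := V_bounds.
have Vge0 : forall v, 0 <= V P v.
  move=> v; have [h _] := HV v; apply: le_trans h; apply: mulr_ge0 (ltW hcp) (nsq_ge0 _).
have hs2 : sigma ^+ 2 <= 1 by rewrite exprn_ile1 // ltW.
have Hk : forall k, V P (x k.+1) + nsq (F *m x k) <= V P (x k) + gamma ^+ 2 * nsq (w k).
  move=> k; apply: le_trans (cl_Vstep0 heps Heps hd0 Hcl k) _.
  rewrite lerD2r; have := Vge0 (x k) => h.
  by rewrite -[leRHS]mul1r ler_wpM2r.
have Ez : (fun k => vnorm (F *m x k) ^+ 2) = (fun k => nsq (F *m x k)).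
  by apply: funext => k; rewrite vnorm_sq.
have Ew : (fun k => vnorm (w k) ^+ 2) = (fun k => nsq (w k)).
  by apply: funext => k; rewrite vnorm_sq.
rewrite Ez Ew; rewrite Ew in Hw.
set sz := series (fun k => nsq (F *m x k)).
set sw := series (fun k => nsq (w k)).
have Hsum : forall n, sz n + V P (x n) <= V P (x 0%N) + gamma ^+ 2 * sw n.
  elim => [|n IH]; first by rewrite /sz /sw !series0 add0r mulr0 addr0.
  rewrite /sz /sw !seriesSr -/sz -/sw.
  have := Hk n; lra.
have hwh : {homo sw : n m / (n <= m)%N >-> n <= m}.
  by apply: series_homo => n; exact: nsq_ge0.
have hzh : {homo sz : n m / (n <= m)%N >-> n <= m}.
  by apply: series_homo => n; exact: nsq_ge0.
have hwl := nondecreasing_cvgn_le hwh Hw.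
have Bz : forall n, sz n <= gamma ^+ 2 * limn sw.
  move=> n; have := Hsum n; rewrite hx0 V0 add0r => h.
  have := Vge0 (x n) => h2.
  have : gamma ^+ 2 * sw n <= gamma ^+ 2 * limn sw.
    by apply: ler_wpM2l; [rewrite exprn_ge0 // ltW | exact: hwl].
  lra.
have Cz : cvgn sz.
  apply: nondecreasing_is_cvgn => //; exists (gamma ^+ 2 * limn sw).
  by move=> _ [n _ <-]; exact: Bz.
split => //.
have hlw0 : 0 <= limn sw by have := hwl 0%N; rewrite /sw series0.
have Lz : limn sz <= gamma ^+ 2 * limn sw.
  by apply: limr_le => //; apply: nearW => n; exact: Bz.
have hg2 : 0 <= gamma ^+ 2 * limn sw.
  by apply: mulr_ge0 => //; rewrite exprn_ge0 // ltW.
apply: le_trans (_ : Num.sqrt (gamma ^+ 2 * limn sw) <= _).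
  by rewrite ler_sqrt.
rewrite sqrtrM; last by rewrite exprn_ge0 // ltW.
by rewrite sqrtr_sqr ger0_norm // ltW.
Qed.

End Main.

Section Helpers.
Variable R : realType.

Lemma bigmax_ge0 (I : finType) (f : I -> R) : 0 <= \big[Num.max/0]_i f i.
Proof. by apply: (big_rec (fun x => 0 <= x)) => // i x _ hx; rewrite le_max hx orbT. Qed.

Lemma bigmax_ge (I : finType) (f : I -> R) i : f i <= \big[Num.max/0]_i f i.
Proof. exact: le_bigmax. Qed.

Lemma Dw_bound m n (D : 'M[R]_(m, n)) (w : 'cV[R]_n) i :
  `|(D *m w) i 0| <= mnorm_inf D * vnorm_inf w.
Proof.
rewrite mxE; apply: le_trans (ler_norm_sum _ _ _) _.
have hw0 : 0 <= vnorm_inf w by apply: bigmax_ge0.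
apply: le_trans (_ : \sum_j `|D i j| * vnorm_inf w <= _).
  apply: ler_sum => j _; rewrite normrM; apply: ler_wpM2l => //.
  exact: (bigmax_ge (fun j => `|w j 0|) j).
rewrite -mulr_suml; apply: ler_wpM2r => //.
exact: (bigmax_ge (fun i => \sum_j `|D i j|) i).
Qed.

Lemma Cx_bound m n (C : 'M[R]_(m, n)) (x : 'cV[R]_n) i :
  `|(C *m x) i 0| <= absum C * vnorm x.
Proof.
rewrite mxE; apply: le_trans (ler_norm_sum _ _ _) _.
apply: le_trans (_ : \sum_j `|C i j| * vnorm x <= _).
  apply: ler_sum => j _; rewrite normrM; apply: ler_wpM2l => //.
  exact: coord_le_vnorm.
rewrite -mulr_suml; apply: ler_wpM2r; first exact: vnorm_ge0.
exact: (sum_ge_term (f := fun i => \sum_j `|C i j|) i (fun i => sumr_ge0 _ (fun j _ => normr_ge0 _))).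
Qed.

Lemma young (ep c t : R) : 0 < ep -> 2 * c * t - ep * t ^+ 2 <= c ^+ 2 / ep.
Proof.
move=> he.
have E : c ^+ 2 / ep - (2 * c * t - ep * t ^+ 2) = (ep * t - c) ^+ 2 / ep.
  by field; rewrite gt_eqF.
have : 0 <= (ep * t - c) ^+ 2 / ep by rewrite divr_ge0 ?sqr_ge0 // ltW.
rewrite -E subr_ge0 //.
Qed.

Lemma bernoulli_dec (th : R) k : 0 <= th -> th <= 1 -> (1 - th) ^+ k * (1 + k%:R * th) <= 1.
Proof.
move=> h0 h1; elim: k => [|k IH]; first by rewrite expr0 mul0r addr0 mulr1.
have hp : 0 <= (1 - th) ^+ k by rewrite exprn_ge0 // subr_ge0.
rewrite exprSr -mulrA.
apply: le_trans IH; apply: ler_wpM2l => //.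
rewrite -natr1.
have H : 0 <= th * th * (k%:R + 1) by rewrite !mulr_ge0 // addr_ge0.
have E : (1 - th) * (1 + (k%:R + 1) * th) = 1 + k%:R * th - th * th * (k%:R + 1) by ring.
rewrite E; lra.
Qed.

End Helpers.

Section Main2.
Variable R : realType.
Variables (nx nu ny nw nz : nat).
Variables (A : 'M[R]_nx) (B : 'M[R]_(nx, nu)) (C : 'M[R]_(ny, nx))
  (D : 'M[R]_(ny, nw)) (F : 'M[R]_(nz, nx)) (K1 K2 : 'M[R]_(nu, ny))
  (Dmin Dmax : R) (lam : 'I_ny -> R) (sigma gamma : R)
  (P : 'I_2 -> 'M[R]_nx)
  (L M N Z : 'I_2 -> ('I_ny -> bool) -> 'M[R]_ny).
Hypotheses (hDmin : 0 <= Dmin) (hD : Dmin < Dmax) (hlam : forall i, 0 < lam i)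
  (hsig : 0 < sigma) (hsig1 : sigma <= 1) (hgam : 0 < gamma)
  (HP : forall p, posdef (P p))
  (HW : forall p j, let W := block_mx (L p j) (N p j) (N p j)^T (M p j) in
     W^T = W /\ forall a b, 0 <= W a b)
  (HZ : forall p j, (Z p j)^T = Z p j)
  (Hlmi : forall (p q : 'I_2) (j : 'I_ny -> bool),
     posdef (lmi_mat A B C D F (sel p K1 K2) (sel p Dmin Dmax) sigma gamma
               (Lambda lam j) (P p) (P q) (L q j) (M q j) (N q j) (Z q j))).

Lemma part2 (delta : 'I_ny -> R) : (forall i, delta i = 0) ->
   exists Mc : R, 1 <= Mc /\
     forall x yt yt0,
       closed_loop A B C D K1 K2 Dmin Dmax lam delta x (fun _ => 0) yt yt0 ->
       forall k, vnorm (x k) <= Mc * sigma ^+ k * vnorm (x 0%N).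
Proof.
move=> hd0.
have [ep hep Hep] := eps_unif Hlmi.
have [cp hcp [cP hcP HV]] := V_bounds HP.
set Mc := Num.max 1 (Num.sqrt (cP / cp)).
exists Mc; split; first by rewrite le_max lexx.
move=> x yt yt0 Hcl.
have Vge0 : forall v, 0 <= V P v.
  move=> v; have [h _] := HV v; apply: le_trans h; apply: mulr_ge0 (ltW hcp) (nsq_ge0 _).
have Hk : forall k, V P (x k.+1) <= sigma ^+ 2 * V P (x k).
  move=> k; have := cl_Vstep0 hDmin hD hlam hsig HW hep Hep hd0 Hcl k.
  rewrite nsq0 mulr0 addr0; have := nsq_ge0 (F *m x k); lra.
have hs2 : 0 <= sigma ^+ 2 by rewrite exprn_ge0 // ltW.
have Hp : forall k, V P (x k) <= (sigma ^+ 2) ^+ k * V P (x 0%N).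
  elim => [|k IH]; first by rewrite expr0 mul1r.
  apply: le_trans (Hk k) _.
  have E : (sigma ^+ 2) ^+ k.+1 * V P (x 0%N) = sigma ^+ 2 * ((sigma ^+ 2) ^+ k * V P (x 0%N)).
    by rewrite exprSr; ring.
  by rewrite E; apply: ler_wpM2l.
move=> k.
have hMc0 : 0 <= Mc by rewrite le_max ler01.
have hn0 := vnorm_ge0 (x 0%N).
rewrite -(ler_pXn2r (_ : 0 < 2)%N) ?nnegrE ?vnorm_ge0 //; last first.
  by rewrite mulr_ge0 // mulr_ge0 // exprn_ge0 // ltW.
rewrite vnorm_sq !exprMn vnorm_sq -exprM mulnC exprM.
have h1 : cp * nsq (x k) <= (sigma ^+ 2) ^+ k * (cP * nsq (x 0%N)).
  have [h _] := HV (x k); have [_ h'] := HV (x 0%N).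
  apply: le_trans h _; apply: le_trans (Hp k) _; apply: ler_wpM2l => //.
  exact: exprn_ge0.
have hM2 : cP / cp <= Mc ^+ 2.
  have hs : 0 <= Num.sqrt (cP / cp) := sqrtr_ge0 _.
  have : Num.sqrt (cP / cp) <= Mc by rewrite le_max lexx orbT.
  move=> hle; rewrite -[cP / cp]sqr_sqrtr; last by rewrite divr_ge0 // ltW.
  by rewrite (ler_pXn2r (_ : 0 < 2)%N) ?nnegrE.
have hsk : 0 <= (sigma ^+ 2) ^+ k by exact: exprn_ge0.
have hnx0 := nsq_ge0 (x 0%N).
have h2 : nsq (x k) <= cP / cp * ((sigma ^+ 2) ^+ k * nsq (x 0%N)).
  rewrite -(ler_pM2l hcp); apply: le_trans h1 _.
  rewrite le_eqVlt; apply/orP; left; apply/eqP; field; by rewrite gt_eqF.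
apply: le_trans h2 _.
rewrite -[in X in _ <= X]mulrA; apply: ler_wpM2r => //; exact: mulr_ge0.
Qed.

End Main2.

Section Main3.
Variable R : realType.
Variables (nx nu ny nw nz : nat).
Variables (A : 'M[R]_nx) (B : 'M[R]_(nx, nu)) (C : 'M[R]_(ny, nx))
  (D : 'M[R]_(ny, nw)) (F : 'M[R]_(nz, nx)) (K1 K2 : 'M[R]_(nu, ny))
  (Dmin Dmax : R) (lam : 'I_ny -> R) (sigma gamma : R)
  (P : 'I_2 -> 'M[R]_nx)
  (L M N Z : 'I_2 -> ('I_ny -> bool) -> 'M[R]_ny).
Hypotheses (hDmin : 0 <= Dmin) (hD : Dmin < Dmax) (hlam : forall i, 0 < lam i)
  (hsig : 0 < sigma) (hsig1 : sigma <= 1) (hgam : 0 < gamma)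
  (HP : forall p, posdef (P p))
  (HW : forall p j, let W := block_mx (L p j) (N p j) (N p j)^T (M p j) in
     W^T = W /\ forall a b, 0 <= W a b)
  (HZ : forall p j, (Z p j)^T = Z p j)
  (Hlmi : forall (p q : 'I_2) (j : 'I_ny -> bool),
     posdef (lmi_mat A B C D F (sel p K1 K2) (sel p Dmin Dmax) sigma gamma
               (Lambda lam j) (P p) (P q) (L q j) (M q j) (N q j) (Z q j))).

Lemma part1 (delta : 'I_ny -> R) : (forall i, 0 <= delta i) ->
  exists rho : R, 0 <= rho /\
     forall wbar : R, 0 <= wbar ->
     forall x w yt yt0,
       closed_loop A B C D K1 K2 Dmin Dmax lam delta x w yt yt0 ->
       (forall k, vnorm_inf (w k) <= wbar) ->
       let eta := rho * \big[Num.max/0]_i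
                    ((Dmax * lam i + 1) * wbar * mnorm_inf D + delta i) in
       forall eps : R, 0 < eps -> exists K0 : nat,
         forall k, (K0 <= k)%N -> vnorm (x k) <= eta + eps.
Proof.
move=> hdel.
have [ep hep Hep] := eps_unif Hlmi.
have [cp hcp [cP hcP HV]] := V_bounds HP.
have Vge0 : forall v, 0 <= V P v.
  move=> v; have [h _] := HV v; apply: le_trans h; apply: mulr_ge0 (ltW hcp) (nsq_ge0 _).
set Wm := Wmax L M N.
have hWm : 0 <= Wm by apply: Wmax_ge0.
set Ls := \sum_i lam i.
have hLs : 0 <= Ls by apply: sumr_ge0 => i _; exact: ltW.
have hDmax : 0 <= Dmax by apply: le_trans hDmin (ltW hD).
set c1 := Dmax * Ls * absum C.
have hc1 : 0 <= c1 by rewrite /c1 !mulr_ge0 // absum_ge0.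
set Km := (Wm ^+ 2 + 2 * (Wm * c1) ^+ 2) / ep.
have hKm : 0 <= Km.
  apply: divr_ge0; last exact: ltW.
  by apply: addr_ge0; [exact: sqr_ge0 | apply: mulr_ge0 => //; exact: sqr_ge0].
set th := ep / (2 * (cP + ep)).
have hcPe : 0 < cP + ep by rewrite addr_gt0.
have hth0 : 0 < th by rewrite /th divr_gt0 // mulr_gt0.
have hth1 : th <= 1.
  rewrite /th ler_pdivrMr ?mulr_gt0 // mul1r; lra.
have hthc : th * cP <= ep / 2.
  have E : ep / 2 - th * cP = ep * ep / (2 * (cP + ep)).
    by rewrite /th; field; rewrite gt_eqF.
  have : 0 <= ep * ep / (2 * (cP + ep)).
    by apply: divr_ge0; apply: mulr_ge0 => //; apply: ltW.
  by rewrite -E subr_ge0.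
set rho := Num.sqrt (Km / (th * cp)).
exists rho; split; first exact: sqrtr_ge0.
move=> wbar hwbar x w yt yt0 Hcl Hw eta eps heps.
set mm := \big[Num.max/0]_i ((Dmax * lam i + 1) * wbar * mnorm_inf D + delta i).
have hmm : 0 <= mm by apply: bigmax_ge0.
have hnD : 0 <= mnorm_inf D by apply: bigmax_ge0.
have Hk : forall k, V P (x k.+1) <= (1 - th) * V P (x k) + Km * mm ^+ 2.
  move=> k.
  have [E [hE Hb Hx]] := cl_step hDmin hD hlam hdel Hcl k.
  have /andP[hE1 hE2] := hE.
  have hE0 : 0 <= E by apply: le_trans hDmin hE1.
  set xk := x k in Hb Hx *.
  set z := yt k - C *m xk.
  set del := fun i => (Dmax * lam i + 1) * wbar * mnorm_inf D + delta i.
  set U := c1 * vnorm xk + vnorm z.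
  have hU : 0 <= U.
    by apply: addr_ge0; [apply: mulr_ge0 => //; exact: vnorm_ge0 | exact: vnorm_ge0].
  have hdm : forall i, del i <= mm by move=> i; exact: (bigmax_ge del i).
  have E0 : C *m xk + D *m (0 : 'cV[R]_nw) = C *m xk by rewrite mulmx0 addr0.
  have Hb' : forall i, `|(yt k - (C *m xk + D *m (0 : 'cV[R]_nw))) i 0| <=
      E * (lam i * `|(C *m xk + D *m (0 : 'cV[R]_nw)) i 0|) + del i.
    move=> i; rewrite E0 -/z.
    set d := D *m w k in Hb *.
    have e1 : z i 0 = (yt k - (C *m xk + d)) i 0 + d i 0 by rewrite /z !mxE; ring.
    have e2 : (C *m xk + d) i 0 = (C *m xk) i 0 + d i 0 by rewrite !mxE.
    have hb := Hb i.
    have hd : `|d i 0| <= mnorm_inf D * wbar.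
      apply: le_trans (Dw_bound D (w k) i) _; exact: ler_wpM2l.
    have hn1 : `|z i 0| <= `|(yt k - (C *m xk + d)) i 0| + `|d i 0|.
      by rewrite e1 ler_normD.
    have hn2 : `|(C *m xk + d) i 0| <= `|(C *m xk) i 0| + `|d i 0|.
      by rewrite e2 ler_normD.
    have hl := ltW (hlam i).
    have h3 : E * (lam i * `|(C *m xk + d) i 0|) <=
              E * (lam i * `|(C *m xk) i 0|) + E * (lam i * `|d i 0|).
      rewrite -mulrDr; apply: ler_wpM2l => //; rewrite -mulrDr; exact: ler_wpM2l.
    have h4a : E * lam i <= Dmax * lam i := ler_wpM2r hl hE2.
    have h4b : E * lam i * `|d i 0| <= Dmax * lam i * (mnorm_inf D * wbar).
      exact: ler_pM (mulr_ge0 hE0 hl) (normr_ge0 _) h4a hd.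
    have h4 : E * (lam i * `|d i 0|) <= Dmax * lam i * (mnorm_inf D * wbar).
      have -> : E * (lam i * `|d i 0|) = E * lam i * `|d i 0| by rewrite mulrA.
      exact: h4b.
    have E6 : del i = Dmax * lam i * (mnorm_inf D * wbar) + mnorm_inf D * wbar + delta i.
      by rewrite /del; ring.
    lra.
  have HU : forall i, E * (lam i * `|(C *m xk + D *m (0 : 'cV[R]_nw)) i 0|) +
      `|(yt k - (C *m xk + D *m (0 : 'cV[R]_nw))) i 0| <= U.
    move=> i; rewrite E0 -/z.
    have hl := ltW (hlam i).
    have hl' : lam i <= Ls by exact: (sum_ge_term i (fun j => ltW (hlam j))).
    have h0 : E * lam i <= Dmax * Ls by apply: ler_pM.
    have h1 : E * lam i * `|(C *m xk) i 0| <= Dmax * Ls * (absum C * vnorm xk).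
      by apply: ler_pM => //; [rewrite mulr_ge0 | exact: Cx_bound].
    have h2 := coord_le_vnorm z i.
    have -> : E * (lam i * `|(C *m xk) i 0|) = E * lam i * `|(C *m xk) i 0| by ring.
    have -> : U = Dmax * Ls * (absum C * vnorm xk) + vnorm z by rewrite /U /c1; ring.
    lra.
  have h := Vstep hDmin hD hlam hsig HW hep Hep hE hmm hU hdm Hb' HU.
  rewrite E0 nsq0 mulr0 !addr0 -/z -Hx in h.
  set vx := vnorm xk; set vz := vnorm z.
  have hsq1 : nsq xk = vx ^+ 2 by rewrite vnorm_sq.
  have hsq2 : nsq z = vz ^+ 2 by rewrite vnorm_sq.
  rewrite hsq1 hsq2 in h.
  have hVs : sigma ^+ 2 * V P xk <= V P xk.
    by rewrite -[leRHS]mul1r ler_wpM2r // exprn_ile1 // ltW.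
  have hF := nsq_ge0 (F *m xk).
  have y1 := young (mm * Wm) vz hep.
  have hep2 : 0 < ep / 2 by rewrite divr_gt0.
  have y2 := young (mm * Wm * c1) vx hep2.
  have EU : 2 * mm * U * Wm = 2 * (mm * Wm * c1) * vx + 2 * (mm * Wm) * vz.
    by rewrite /U -/vx -/vz; ring.
  have EK : Km * mm ^+ 2 = (mm * Wm) ^+ 2 / ep + (mm * Wm * c1) ^+ 2 / (ep / 2).
    by rewrite /Km; field; rewrite gt_eqF.
  have Eep : ep * (vx ^+ 2 + vz ^+ 2) = ep / 2 * vx ^+ 2 + ep / 2 * vx ^+ 2 + ep * vz ^+ 2.
    by field.
  have hVx : th * V P xk <= ep / 2 * vx ^+ 2.
    have [_ hv] := HV xk; rewrite hsq1 in hv.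
    apply: le_trans (ler_wpM2l (ltW hth0) hv) _; rewrite mulrA.
    apply: ler_wpM2r => //; exact: sqr_ge0.
  have Eth : (1 - th) * V P xk = V P xk - th * V P xk by ring.
  rewrite Eth EK; rewrite Eep EU in h; lra.
set V0 := V P (x 0%N).
have Hit : forall k, V P (x k) <= (1 - th) ^+ k * V0 + Km * mm ^+ 2 / th.
  elim => [|k IH].
    rewrite expr0 mul1r lerDl; apply: divr_ge0; [exact: mulr_ge0 hKm (sqr_ge0 _) | exact: ltW].
  apply: le_trans (Hk k) _.
  have h1th : 0 <= 1 - th by lra.
  apply: le_trans (_ : (1 - th) * ((1 - th) ^+ k * V0 + Km * mm ^+ 2 / th) + Km * mm ^+ 2 <= _).
    by rewrite lerD2r; apply: ler_wpM2l.
  rewrite le_eqVlt; apply/orP; left; apply/eqP.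
  rewrite [(1 - th) ^+ k.+1]exprSr; field; by rewrite gt_eqF.
have hV0 : 0 <= V0 by apply: Vge0.
have he2 : 0 < cp * eps ^+ 2 * th.
  by apply: mulr_gt0 => //; apply: mulr_gt0 => //; exact: exprn_gt0.
exists (Num.Def.trunc (V0 / (cp * eps ^+ 2 * th))).+1 => k hk.
have hkR : V0 / (cp * eps ^+ 2 * th) < k%:R.
  apply: lt_le_trans (truncnS_gt _) _; rewrite ler_nat; exact: hk.
have hk2 : V0 <= cp * eps ^+ 2 * (1 + k%:R * th).
  move: hkR; rewrite ltr_pdivrMr // => hkR.
  have : k%:R * (cp * eps ^+ 2 * th) = cp * eps ^+ 2 * (k%:R * th) by ring.
  have : 0 <= cp * eps ^+ 2 by rewrite mulr_ge0 ?sqr_ge0 // ltW.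
  move=> h0 h1; rewrite mulrDr mulr1; lra.
have hb := bernoulli_dec k (ltW hth0) hth1.
have hpk : 0 <= (1 - th) ^+ k by rewrite exprn_ge0 // subr_ge0.
have hdec : (1 - th) ^+ k * V0 <= cp * eps ^+ 2.
  apply: le_trans (ler_wpM2l hpk hk2) _.
  rewrite mulrCA -[leRHS]mulr1; apply: ler_wpM2l => //.
  by rewrite mulr_ge0 ?sqr_ge0 // ltW.
have hxk : cp * nsq (x k) <= cp * eps ^+ 2 + Km * mm ^+ 2 / th.
  have [h _] := HV (x k); apply: le_trans h _; apply: le_trans (Hit k) _.
  by rewrite lerD2r.
have hrho2 : rho ^+ 2 = Km / (th * cp).
  by rewrite /rho sqr_sqrtr // divr_ge0 // mulr_ge0 // ltW.
have hnx : nsq (x k) <= eps ^+ 2 + rho ^+ 2 * mm ^+ 2.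
  rewrite hrho2 -(ler_pM2l hcp); apply: le_trans hxk _.
  rewrite le_eqVlt; apply/orP; left; apply/eqP; field.
  by rewrite !gt_eqF.
have hrho : 0 <= rho by apply: sqrtr_ge0.
rewrite /eta -/mm.
rewrite -(ler_pXn2r (_ : 0 < 2)%N) ?nnegrE ?vnorm_ge0 //; last first.
  by rewrite addr_ge0 ?mulr_ge0 // ltW.
rewrite vnorm_sq; apply: le_trans hnx _.
have : 0 <= 2 * (rho * mm) * eps by rewrite !mulr_ge0 // ltW.
rewrite sqrrD exprMn; lra.
Qed.

End Main3.

Unset Implicit Arguments.

Theorem theorem1 (R : realType) (nx nu ny nw nz : nat)
    (A : 'M[R]_nx) (B : 'M[R]_(nx, nu)) (C : 'M[R]_(ny, nx)) (D : 'M[R]_(ny, nw))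
    (F : 'M[R]_(nz, nx)) (K1 K2 : 'M[R]_(nu, ny))
    (Dmin Dmax : R) (lam delta : 'I_ny -> R) (sigma gamma : R)
    (P : 'I_2 -> 'M[R]_nx)
    (L M N Z : 'I_2 -> ('I_ny -> bool) -> 'M[R]_ny) :
  0 <= Dmin -> Dmin < Dmax ->
  (forall i, 0 < lam i) -> (forall i, 0 <= delta i) ->
  0 < sigma -> sigma <= 1 -> 0 < gamma ->
  (forall p, posdef (P p)) ->
  (forall p j, let W := block_mx (L p j) (N p j) (N p j)^T (M p j) in
     W^T = W /\ forall a b, 0 <= W a b) ->
  (forall p j, (Z p j)^T = Z p j) ->
  (forall (p q : 'I_2) (j : 'I_ny -> bool),
     posdef (lmi_mat A B C D F (sel p K1 K2) (sel p Dmin Dmax) sigma gamma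
               (Lambda lam j) (P p) (P q) (L q j) (M q j) (N q j) (Z q j))) ->
  (* (i) practical stability with ultimate bound eta *)
  (exists rho : R, 0 <= rho /\
     forall wbar : R, 0 <= wbar ->
     forall x w yt yt0,
       closed_loop A B C D K1 K2 Dmin Dmax lam delta x w yt yt0 ->
       (forall k, vnorm_inf (w k) <= wbar) ->
       let eta := rho * \big[Num.max/0]_i
                    ((Dmax * lam i + 1) * wbar * mnorm_inf D + delta i) in
       (* limsup_{k -> oo} ||x[k]|| <= eta *)
       forall eps : R, 0 < eps -> exists K0 : nat,
         forall k, (K0 <= k)%N -> vnorm (x k) <= eta + eps)
  /\
  (* (ii) decay rate sigma *)
  ((forall i, delta i = 0) ->
   exists Mc : R, 1 <= Mc /\
     forall x yt yt0,
       closed_loop A B C D K1 K2 Dmin Dmax lam delta x (fun _ => 0) yt yt0 ->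
       forall k, vnorm (x k) <= Mc * sigma ^+ k * vnorm (x 0%N))
  /\
  (* (iii) l2-gain from w to z = F x is at most gamma *)
  ((forall i, delta i = 0) ->
   forall x w yt yt0,
     closed_loop A B C D K1 K2 Dmin Dmax lam delta x w yt yt0 ->
     x 0%N = 0 ->
     cvgn (series (fun k => vnorm (w k) ^+ 2)) ->
     cvgn (series (fun k => vnorm (F *m x k) ^+ 2)) /\
     Num.sqrt (limn (series (fun k => vnorm (F *m x k) ^+ 2)))
       <= gamma * Num.sqrt (limn (series (fun k => vnorm (w k) ^+ 2)))).
Proof.
move=> hDmin hD hlam hdel hsig hsig1 hgam HP HW HZ Hlmi.
split; first exact: (part1 hDmin hD hlam hsig hsig1 HP HW Hlmi hdel).
split; first by move=> hd0; exact: (part2 hDmin hD hlam hsig HP HW Hlmi hd0).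
by move=> hd0; exact: (part3 hDmin hD hlam hsig hsig1 hgam HP HW Hlmi hd0).
Qed.
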